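(* Let $\{G_\sigma:\sigma>0\}$ be a scale family, $G=G_1$, $\ell$ a loss function whose induced divergence $d$ is symmetric and rescalable with scaling function $h$. Let $\sigma_{\mathrm{test}}>0$ be a random variable that is not almost surely constant, such that $\sigma_{\mathrm{test}}$ and $1/\sigma_{\mathrm{test}}$ have the same distribution, and such that $\mathbb{E}\,\ell(G_\sigma,G_{\sigma_{\mathrm{test}}})$ is finite for all $\sigma>0$. Define $f(\sigma)=d(G_\sigma,G)$. Assume $f$ and $h$ are differentiable on $(0,\infty)$, $f(\sigma)>0$ for $\sigma\neq1$, the function $(h-1)/f$ is differentiable on $(1,\infty)$, and the function $\sigma\mapsto\mathbb{E}\,d(G_\sigma,G_{\sigma_{\mathrm{test}}})$ is differentiable at $\sigma=1$ with derivative equal to $\mathbb{E}\big[\tfrac{\partial}{\partial\sigma}d(G_\sigma,G_{\sigma_{\mathrm{test}}})\big|_{\sigma=1}\big]$ (this holds, e.g., if $\sigma_{\mathrm{test}}$ has a compactly supported density on $(0,\infty)$ and $f'$ is continuous). Then: (i) if $((h-1)/f)'>0$ on $(1,\infty)$, there exists $\sigma^*<1$ with $\mathbb{E}\,\ell(G_{\sigma^*},G_{\sigma_{\mathrm{test}}})<\mathbb{E}\,\ell(G,G_{\sigma_{\mathrm{test}}})$; (ii) if $((h-1)/f)'<0$ on $(1,\infty)$, there exists $\sigma^*>1$ with $\mathbb{E}\,\ell(G_{\sigma^*},G_{\sigma_{\mathrm{test}}})<\mathbb{E}\,\ell(G,G_{\sigma_{\mathrm{test}}})$.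
   Context: Expected loss $\ell(F,G)=\mathbb{E}\,\ell(F,Y)$ for $Y\sim G$; induced divergence $d(F,G)=\ell(F,G)-\ell(G,G)$. Scale family: if $Y\sim G_1$, $G_\sigma$ is the law of $\sigma Y$. $d$ is symmetric if $d(F,G)=d(G,F)$ for all $F,G$; it is rescalable with scaling function $h:(0,\infty)\to(0,\infty)$ if $d(F_\sigma,G_\tau)=h(\tau)\,d(F_{\sigma/\tau},G_1)$ for all $\sigma,\tau>0$ and all scale families $\{F_\sigma\},\{G_\sigma\}$. Here $\mathbb{E}\,\ell(F,G_{\sigma_{\mathrm{test}}})$ denotes the expectation over $\sigma_{\mathrm{test}}$ of the expected loss $\ell(F,G_{\sigma_{\mathrm{test}}})$. *)

(* Defs.v *)
From HB Require Import structures.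
From mathcomp Require Import all_boot all_order all_algebra.
From mathcomp Require Import all_classical all_reals all_analysis.
Set Implicit Arguments. Unset Strict Implicit. Unset Printing Implicit Defensive.
Import Order.TTheory GRing.Theory Num.Theory.
Import numFieldNormedType.Exports.
Local Open Scope classical_set_scope.
Local Open Scope ring_scope.

(* A (predictive) distribution on the real line is represented by its
   underlying set function [set R -> \bar R] (a probability measure on the
   Borel sets of R). *)
Notation dist R := (set R -> \bar R).

Definition scale {R : realType} (G : dist R) (s : R) : dist R :=
  pushforward G (fun y : R => s * y).

Definition eloss {R : realType} (l : dist R -> R -> R) (F G : dist R) : R :=
  fine (\int[G]_(y in [set: R]) (l F y)%:E)%E.

Definition divg {R : realType} (l : dist R -> R -> R) (F G : dist R) : R :=
  eloss l F G - eloss l G G.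

Definition loss_domain {R : realType} (D : set (dist R)) (l : dist R -> R -> R)
  : Prop :=
  [/\ (forall F, D F -> exists Q : probability R R, F = (Q : set R -> \bar R)),
      (forall F s, D F -> 0 < s -> D (scale F s)) &
      (forall F G, D F -> D G -> G.-integrable [set: R] (fun y => (l F y)%:E))].

Definition div_symmetric {R : realType} (D : set (dist R)) (l : dist R -> R -> R)
  : Prop :=
  forall F G, D F -> D G -> divg l F G = divg l G F.

Definition div_rescalable {R : realType} (D : set (dist R)) (l : dist R -> R -> R)
  (h : R -> R) : Prop :=
  (forall t, 0 < t -> 0 < h t) /\
  forall F G s t, D F -> D G -> 0 < s -> 0 < t ->
    divg l (scale F s) (scale G t) = h t * divg l (scale F (s / t)) G.

(* Main.v *)
Require Import Defs.
From HB Require Import structures.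
From mathcomp Require Import all_boot all_order all_algebra.
From mathcomp Require Import all_classical all_reals all_analysis.
From mathcomp Require Import measurable_realfun.
From mathcomp Require Import ring lra.
Set Implicit Arguments. Unset Strict Implicit. Unset Printing Implicit Defensive.
Import Order.TTheory GRing.Theory Num.Theory.
Import numFieldNormedType.Exports.
Local Open Scope classical_set_scope.
Local Open Scope ring_scope.

Lemma harm_dnbhs (R : realType) : (@harmonic R) @ \oo --> (0:R)^'.
Proof.
move=> A HA.
have H1 : \forall n \near \oo, (fun y : R => y != 0 -> A y) (harmonic n).
  exact: (cvg_harmonic HA).
apply: filterS H1 => n /= H; apply: H.
by rewrite invr_eq0 pnatr_eq0.
Qed.

Lemma seq_deriv (R : realType) (F : R -> R) (x : R) :
  derivable F x 1 ->
  (fun n : nat => (F (x + n.+1%:R^-1) - F x) * n.+1%:R) @ \oo --> derive1 F x.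
Proof.
move=> dF; rewrite derive1E /derive.
have := cvg_comp _ _ (@harm_dnbhs R) dF.
apply: cvg_trans; apply: near_eq_cvg; near=> n => /=.
have E : forall a b : R, a *: b = a * b by [].
by rewrite !E invrK mulr1 [_ + x]addrC mulrC.
Unshelve. all: by end_near. Qed.

Lemma cont_pos_meas (R : realType) (k : R -> R) :
  (forall x, 0 < x -> {for x, continuous k}) -> measurable_fun (`]0, +oo[ : set R) k.
Proof.
move=> H; apply: open_continuous_measurable_fun; first exact: interval_open.
by move=> x; rewrite inE /= in_itv /= andbT => x0; exact: H.
Qed.

Lemma der_cont (R : realType) (f : R -> R) x : derivable f x 1 -> {for x, continuous f}.
Proof. by move=> d; apply/differentiable_continuous/derivable1_diffP. Qed.

Lemma deriv_meas (R : realType) (f : R -> R) :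
  (forall x, 0 < x -> derivable f x 1) -> measurable_fun (`]0, +oo[ : set R) (derive1 f).
Proof.
move=> df.
apply: (@measurable_fun_cvg _ R R (`]0, +oo[ : set R) (fun n x => (f (x + n.+1%:R^-1) - f x) * n.+1%:R) (derive1 f)).
- move=> n; apply: cont_pos_meas => x x0.
  apply: cvgM; last exact: cvg_cst.
  apply: cvgB; last exact: der_cont (df _ x0).
  apply: continuous_comp; first by apply: cvgD; [exact: cvg_id|exact: cvg_cst].
  apply: der_cont; apply: df; exact: (addr_gt0 x0 (harmonic_gt0 n)).
- move=> x x0; apply: seq_deriv; apply: df; move: x0; by rewrite /= in_itv /= andbT.
Qed.

Lemma near_pos (R : realType) (x : R) : 0 < x -> \forall y \near x, 0 < y.
Proof. by move=> x0; apply: (@cvgr_gt _ _ _ _ (fun y => y) x cvg_id). Qed.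

Lemma deriv_inv (R : realType) (x : R) : x != 0 ->
  derivable (fun y : R => y^-1) x 1 /\ derive1 (fun y : R => y^-1) x = - x ^- 2.
Proof.
move=> x0; split; first exact: (@derivableV _ _ id).
rewrite derive1E (@deriveV _ _ id) // derive_id.
have E : forall a b : R, a *: b = a * b by []. by rewrite E mulr1.
Qed.

Lemma fdrel (R : realType) (f h : R -> R) (x : R) :
  (forall s, 0 < s -> f s = h s * f s^-1) ->
  (forall x, 0 < x -> derivable f x 1) ->
  (forall x, 0 < x -> derivable h x 1) -> 0 < x ->
  derive1 f x = derive1 h x * f x^-1 - h x * derive1 f x^-1 * x ^- 2.
Proof.
move=> Hs df dh x0.
have xn0 : x != 0 by rewrite gt_eqF.
have [dinv inv'] := @deriv_inv R x xn0.
have dfi : derivable (f \o (fun y => y^-1)) x 1.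
  apply/derivable1_diffP; apply: differentiable_comp; first exact/derivable1_diffP.
  by apply/derivable1_diffP; apply: df; rewrite invr_gt0.
rewrite derive1E (@near_eq_derive _ _ _ f (h * (f \o (fun y => y^-1)))); last first.
  by near=> s; rewrite Hs //=; near: s; exact: near_pos.
rewrite (deriveM (dh x x0) dfi).
have dc : derive1 (f \o (fun y => y^-1)) x = derive1 f x^-1 * (- x ^- 2).
  have dfx : derivable f x^-1 1 by apply: df; rewrite invr_gt0.
  by rewrite (derive1_comp dinv dfx) inv'.
rewrite -(derive1E (f \o _)) -(derive1E h) dc.
have E : forall a b : R, a *: b = a * b by [].
by rewrite !E /= !mulrN mulrA addrC [f x^-1 * _]mulrC.
Unshelve. all: by end_near. Qed.


Lemma qderiv (R : realType) (f h : R -> R) (x : R) :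
  f x != 0 -> derivable f x 1 -> derivable h x 1 ->
  derive1 (fun y => (h y - 1) / f y) x =
  derive1 h x / f x - (h x - 1) * derive1 f x / f x ^+ 2.
Proof.
move=> fx0 df dh.
have -> : (fun y => (h y - 1) / f y) = (h - cst 1) * (fun y => (f y)^-1) by [].
have dc : derivable (cst (1:R)) x 1 := derivable_cst _ _ _.
have dB : derivable (h - cst 1) x 1 := derivableB dh dc.
have dV : derivable (fun y => (f y)^-1) x 1 := derivableV fx0 df.
rewrite derive1E (deriveM dB dV) (deriveV fx0 df) (deriveB dh dc) derive_cst -!derive1E.
have E : forall a b : R, a *: b = a * b by [].
rewrite !E /= subr0.
have fx2 : f x ^+ 2 != 0 by rewrite expf_neq0.
have -> : (h - cst 1) x = h x - 1 by [].
field; done.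
Qed.

Lemma key_sign (R : realType) (f h : R -> R) (x : R) :
  (forall s, 0 < s -> f s = h s * f s^-1) ->
  (forall s, 0 < s -> s != 1 -> 0 < f s) ->
  (forall s, 0 < s -> 0 < h s) ->
  (forall x, 0 < x -> derivable f x 1) ->
  (forall x, 0 < x -> derivable h x 1) ->
  1 < x ->
  h x * derive1 f x^-1 / x + h x^-1 * derive1 f x^-1^-1 / x^-1 =
  x / h x * f x ^+ 2 * derive1 (fun y => (h y - 1) / f y) x.
Proof.
move=> Hs fpos hpos df dh x1.
have x0 : 0 < x by apply: lt_trans x1.
have xn0 : x != 0 by rewrite gt_eqF.
have xn1 : x != 1 by rewrite gt_eqF.
have xi0 : 0 < x^-1 by rewrite invr_gt0.
have Fp := fpos x x0 xn1.
have Fn0 : f x != 0 by rewrite gt_eqF.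
have ap := hpos x x0.
have an0 : h x != 0 by rewrite gt_eqF.
rewrite qderiv //; [|exact: df x0|exact: dh x0].
have rel := @fdrel R f h x Hs df dh x0.
have HF := Hs x x0.
have HFi := Hs _ xi0. rewrite invrK in HFi.
rewrite invrK.
move: rel HF HFi.
move: (f x^-1) (h x^-1) (derive1 f x) (derive1 f x^-1) (derive1 h x) => Fi b d di hp.
move=> rel HF HFi.
have EFi : Fi = f x / h x by rewrite HF; field.
have Eb : b = (h x)^-1.
  apply: (@mulIf _ (f x)) => //; rewrite -HFi EFi; field; done.
have Edi : di = (hp * Fi - d) * x ^+ 2 / h x.
  by rewrite rel; field; rewrite an0 xn0.
rewrite Edi Eb EFi; field; by rewrite an0 xn0 Fn0.
Qed.

Lemma quot_cvg (R : realType) (F : R -> R) (x : R) : derivable F x 1 ->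
  (fun t : R => t^-1 * (F (t + x) - F x)) @ 0^' --> derive1 F x.
Proof.
move=> dF; rewrite derive1E.
have := dF. apply: cvg_trans; apply: near_eq_cvg; near=> t.
have E : forall a b : R, a *: b = a * b by [].
by rewrite /= !E mulr1.
Unshelve. all: by end_near. Qed.

Lemma descent_pos (R : realType) (F : R -> R) (x : R) :
  derivable F x 1 -> 0 < derive1 F x ->
  exists y, x - 1 < y /\ y < x /\ F y < F x.
Proof.
move=> dF d0.
have := quot_cvg dF; move=> /cvgr_gt /(_ _ d0).
move=> /nbhs_ballP [e /= e0 He].
set m := Num.min e 1.
have m0 : 0 < m by rewrite lt_min e0 ltr01.
have me : m <= e by rewrite ge_min lexx.
have m1 : m <= 1 by rewrite ge_min lexx orbT.
have := He (- (m / 2)).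
rewrite /ball /= sub0r opprK ger0_norm; last by rewrite divr_ge0 // ltW.
have m2 : m / 2 < e by lra.
have mn0 : - (m / 2) != 0 by rewrite oppr_eq0 gt_eqF // divr_gt0.
move=> /(_ m2 mn0); rewrite nmulr_rgt0; last by rewrite invr_lt0 oppr_lt0 divr_gt0.
rewrite subr_lt0 => H; exists (- (m / 2) + x); split; [lra|split; [lra|exact: H]].
Qed.

Lemma descent_neg (R : realType) (F : R -> R) (x : R) :
  derivable F x 1 -> derive1 F x < 0 ->
  exists y, x < y /\ F y < F x.
Proof.
move=> dF d0.
have := quot_cvg dF; move=> /cvgr_lt /(_ _ d0).
move=> /nbhs_ballP [e /= e0 He].
have := He (e / 2).
rewrite /ball /= sub0r normrN ger0_norm; last by rewrite divr_ge0 // ltW.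
have m2 : e / 2 < e by lra.
have mn0 : e / 2 != 0 by rewrite gt_eqF // divr_gt0.
move=> /(_ m2 mn0); rewrite pmulr_rlt0; last by rewrite invr_gt0 divr_gt0.
rewrite subr_lt0 => H; exists (e / 2 + x); split; [lra|exact: H].
Qed.

Section transfer.
Local Open Scope ereal_scope.
Lemma dist_transfer (R : realType) (dO : measure_display) (Omega : measurableType dO)
  (P : probability Omega R) (X Y : Omega -> R)
  (mX : measurable_fun setT X) (mY : measurable_fun setT Y)
  (phi : R -> R) (mphi : measurable_fun setT phi) :
  (forall A, measurable A -> P (X @^-1` A) = P (Y @^-1` A)) ->
  P.-integrable setT (fun w => (phi (X w))%:E) ->
  P.-integrable setT (fun w => (phi (Y w))%:E) /\
  \int[P]_(w in setT) (phi (X w))%:E = \int[P]_(w in setT) (phi (Y w))%:E.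
Proof.
move=> HXY iX.
pose mPX := measure_function_pushforward__canonical__measure_function_Measure P mX.
pose mPY := measure_function_pushforward__canonical__measure_function_Measure P mY.
have eqm : forall A, measurable A -> A `<=` setT -> mPX A = mPY A.
  by move=> A mA _; exact: HXY.
have mE : measurable_fun setT (EFin \o phi) by apply/measurable_EFinP.
have mEa : measurable_fun setT (fun y => `|(EFin \o phi) y|).
  exact: measurableT_comp.
have absX := @ge0_integral_pushforward _ _ _ _ R X mX P setT _ measurableT mEa (fun _ _ => abse_ge0 _).
have absY := @ge0_integral_pushforward _ _ _ _ R Y mY P setT _ measurableT mEa (fun _ _ => abse_ge0 _).
rewrite preimage_setT in absX absY.
have iY : P.-integrable setT (fun w => (phi (Y w))%:E).
  apply/integrableP; split.
    by apply/measurable_EFinP; apply: measurableT_comp.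
  move/integrableP: iX => [_ iX].
  have <- : \int[mPY]_(y in setT) `|(EFin \o phi) y| = \int[P]_(w in setT) `|(phi (Y w))%:E|.
    exact: absY.
  rewrite -(eq_measure_integral mPY eqm).
  have -> : \int[mPX]_(y in setT) `|(EFin \o phi) y| = \int[P]_(w in setT) `|(phi (X w))%:E|.
    exact: absX.
  exact: iX.
split => //.
have eX := @integral_pushforward _ _ _ _ R X mX P setT (EFin \o phi) mE.
have eY := @integral_pushforward _ _ _ _ R Y mY P setT (EFin \o phi) mE.
rewrite preimage_setT in eX eY.
have <- : \int[mPX]_(y in setT) (EFin \o phi) y = \int[P]_(w in setT) (phi (X w))%:E.
  exact: eX iX measurableT.
have <- : \int[mPY]_(y in setT) (EFin \o phi) y = \int[P]_(w in setT) (phi (Y w))%:E.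
  exact: eY iY measurableT.
exact: eq_measure_integral.
Qed.

End transfer.

Lemma scale1 (R : realType) (G : dist R) : scale G 1 = G.
Proof.
apply/funext => A; rewrite /scale /pushforward; congr G.
by apply/seteqP; split => y /=; rewrite mul1r.
Qed.

Lemma fd_at1 (R : realType) (f : R -> R) : f 1 = 0 ->
  (forall s, 0 < s -> s != 1 -> 0 < f s) -> (forall x, 0 < x -> derivable f x 1) ->
  derive1 f 1 = 0.
Proof.
move=> f1 fpos df.
have := @derive1_at_min R f 0 2 1 (ler0n _ 2).
case.
- by move=> t; rewrite in_itv /= => /andP[t0 _]; exact: df.
- by rewrite in_itv /= ltr01 ltr1n.
- move=> t; rewrite in_itv /= => /andP[t0 _]; rewrite f1.
  have [->|t1] := eqVneq t 1; first by rewrite f1.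
  exact/ltW/fpos.
- by move=> _ H; rewrite derive1E.
Qed.

Lemma g_meas (R : realType) (f h : R -> R) :
  (forall x, 0 < x -> derivable f x 1) -> (forall x, 0 < x -> derivable h x 1) ->
  measurable_fun (`]0, +oo[ : set R) (fun y => h y * derive1 f y^-1 / y).
Proof.
move=> df dh.
have minv : measurable_fun (`]0, +oo[ : set R) (fun y : R => y^-1).
  by apply: cont_pos_meas => x x0; apply: inv_continuous; rewrite gt_eqF.
apply: measurable_funM; last exact: minv.
apply: measurable_funM.
  by apply: cont_pos_meas => x x0; apply: der_cont; exact: dh.
apply: (@measurable_comp _ _ _ _ _ _ (`]0, +oo[ : set R)) => //.
- move=> _ [y /= y0 <-]; move: y0; rewrite /= !in_itv /= !andbT.
  by rewrite invr_gt0.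
- exact: deriv_meas.
Qed.

Lemma lin_der (R : realType) (t x : R) :
  derivable (fun s : R => s / t) x 1 /\ derive1 (fun s : R => s / t) x = t^-1.
Proof.
have -> : (fun s : R => s / t) = (@id R) * cst t^-1 by [].
split; first by apply: derivableM.
rewrite derive1E deriveM // derive_id derive_cst.
have E : forall a b : R, a *: b = a * b by [].
by rewrite !E mulr0 add0r mulr1.
Qed.


Theorem theorem4 (R : realType)
  (D : set (dist R)) (l : dist R -> R -> R) (h : R -> R)
  (G : probability R R)
  (dO : measure_display) (Omega : measurableType dO) (P : probability Omega R)
  (X : Omega -> R) :
  loss_domain D l ->
  D (G : dist R) ->
  div_symmetric D l ->
  div_rescalable D l h ->
  (* sigma_test = X is a positive random variable *)
  measurable_fun [set: Omega] X ->
  (forall w, 0 < X w) ->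
  (* not almost surely constant *)
  ~ (exists c : R, P (X @^-1` [set c]) = 1%E) ->
  (* X and 1/X have the same distribution *)
  (forall A : set R, measurable A ->
     P (X @^-1` A) = P ((fun w => (X w)^-1) @^-1` A)) ->
  (* E l(G_s, G_X) is finite for all s > 0 *)
  (forall s, 0 < s ->
     P.-integrable [set: Omega]
       (fun w => (eloss l (scale G s) (scale G (X w)))%:E)) ->
  (* f(s) = d(G_s, G) *)
  let f := fun s => divg l (scale G s) G in
  (forall x, 0 < x -> derivable f x 1) ->
  (forall x, 0 < x -> derivable h x 1) ->
  (forall s, 0 < s -> s != 1 -> 0 < f s) ->
  let q := fun x => (h x - 1) / f x in
  (forall x, 1 < x -> derivable q x 1) ->
  (* s |-> E d(G_s, G_X) is (finite and) differentiable at 1 with derivative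
     E[ d/ds d(G_s, G_X) |_{s=1} ] *)
  (forall s, 0 < s ->
     P.-integrable [set: Omega]
       (fun w => (divg l (scale G s) (scale G (X w)))%:E)) ->
  let Ed := fun s => fine (\int[P]_(w in [set: Omega])
                       (divg l (scale G s) (scale G (X w)))%:E)%E in
  derivable Ed 1 1 ->
  P.-integrable [set: Omega]
    (fun w => (derive1 (fun s => divg l (scale G s) (scale G (X w))) 1)%:E) ->
  derive1 Ed 1 = fine (\int[P]_(w in [set: Omega])
                   ((derive1 (fun s => divg l (scale G s) (scale G (X w))) 1)%:E))%E ->
  ((forall x, 1 < x -> 0 < derive1 q x) ->
     exists sstar, 0 < sstar /\ sstar < 1 /\
       (\int[P]_(w in [set: Omega]) (eloss l (scale G sstar) (scale G (X w)))%:E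
        < \int[P]_(w in [set: Omega]) (eloss l G (scale G (X w)))%:E)%E) /\
  ((forall x, 1 < x -> derive1 q x < 0) ->
     exists sstar, 1 < sstar /\
       (\int[P]_(w in [set: Omega]) (eloss l (scale G sstar) (scale G (X w)))%:E
        < \int[P]_(w in [set: Omega]) (eloss l G (scale G (X w)))%:E)%E).

Proof.
move=> Hdom DG Hsym [hpos Hres] mX Xpos Xnc Xdist Hint f df dh fpos q dq Hintd Ed dEd Hintder Hder.
have [HP HDs Hli] := Hdom.
have Ds : forall s, 0 < s -> D (scale G s) by move=> s s0; exact: HDs.
have Hkey : forall s t, 0 < s -> 0 < t ->
    divg l (scale G s) (scale G t) = h t * f (s / t).
  by move=> s t s0 t0; rewrite (Hres _ _ _ _ DG DG s0 t0).
have f1 : f 1 = 0 by rewrite /f scale1 /divg subrr.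
have Hs : forall s, 0 < s -> f s = h s * f s^-1.
  move=> s s0; rewrite /f (Hsym _ _ (Ds s s0) DG).
  by rewrite -{1}(scale1 G) Hkey // div1r.
have fd1 := fd_at1 f1 fpos df.
pose g := fun y => h y * derive1 f y^-1 / y.
have Hg : forall w, derive1 (fun s => divg l (scale G s) (scale G (X w))) 1 = g (X w).
  move=> w; have t0 := Xpos w.
  rewrite derive1E (@near_eq_derive R R^o R^o _ (fun s : R => h (X w) * f (s / X w))); last first.
    by near=> s; rewrite Hkey //; near: s; exact: near_pos.
  have [dl dl'] := lin_der (X w) 1.
  have dfc : derivable (f \o (fun s => s / X w)) 1 1.
    apply/derivable1_diffP; apply: differentiable_comp; first exact/derivable1_diffP.
    by apply/derivable1_diffP; apply: df; rewrite mul1r invr_gt0.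
  rewrite -derive1E.
  rewrite (derive1Ml (f := f \o (fun s => s / X w))) //.
  have dfx : derivable f (1 / X w) 1 by apply: df; rewrite mul1r invr_gt0.
  rewrite (derive1_comp dl dfx).
  by rewrite dl' /g mul1r mulrA.
have claim : forall e : R, (forall x, 1 < x -> 0 < e * derive1 q x) ->
    0 < e * derive1 Ed 1.
  move=> e He.
  have eqg : (fun w => (derive1 (fun s => divg l (scale G s) (scale G (X w))) 1)%:E)
      = (fun w => (g (X w))%:E).
    by apply/funext => w; rewrite Hg.
  rewrite Hder eqg; rewrite eqg in Hintder.
  pose Y := fun w => (X w)^-1.
  have Ypos : forall w, 0 < Y w by move=> w; rewrite /Y invr_gt0.
  have mY : measurable_fun setT Y.
    apply: (@measurable_comp _ _ _ _ _ _ (`]0, +oo[ : set R)) => //.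
    - by move=> _ [w _ <-]; rewrite /= in_itv /= andbT; exact: Xpos.
    - by apply: cont_pos_meas => x x0; apply: inv_continuous; rewrite gt_eqF.
  pose phi := (g \_ (`]0, +oo[ : set R)).
  have mphi : measurable_fun setT phi.
    by apply/(measurable_restrictT _ _).1 => //; exact: g_meas.
  have phiE : forall y, 0 < y -> phi y = g y.
    by move=> y y0; rewrite /phi patchE ifT // inE /= in_itv /= andbT.
  have iX : P.-integrable setT (fun w => (phi (X w))%:E).
    by rewrite (_ : (fun w => _) = (fun w => (g (X w))%:E)) //; apply/funext => w; rewrite phiE.
  have [iY eqXY] := dist_transfer mX mY mphi Xdist iX.
  have iYg : P.-integrable setT (fun w => (g (Y w))%:E).
    by rewrite (_ : (fun w => _) = (fun w => (phi (Y w))%:E)) //; apply/funext => w; rewrite phiE.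
  have eqXYg : (\int[P]_(w in setT) (g (X w))%:E = \int[P]_(w in setT) (g (Y w))%:E)%E.
    rewrite (_ : (fun w => _) = (fun w => (phi (X w))%:E)); last by apply/funext => w; rewrite phiE.
    rewrite eqXY; apply: eq_integral => w _; by rewrite phiE.
  have gsum : forall x, 1 < x -> g x + g x^-1 = x / h x * f x ^+ 2 * derive1 q x.
    move=> x x1; exact: (key_sign Hs fpos hpos df dh x1).
  have psi_pos : forall w, X w != 1 -> 0 < e * (g (X w) + g (Y w)).
    move=> w; rewrite /Y; have x0 := Xpos w; move: (X w) x0 => x x0 xn1.
    have cpos : forall y, 1 < y -> 0 < e * (g y + g y^-1).
      move=> y y1; have y0 : 0 < y by apply: lt_trans y1.
      rewrite gsum // mulrCA pmulr_rgt0; first exact: He.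
      by rewrite mulr_gt0 ?divr_gt0 ?hpos // exprn_gt0 // fpos // gt_eqF.
    have [x1|x1|x1] := ltgtP x 1.
    + by rewrite -[in g x](invrK x) addrC; apply: cpos; rewrite invf_gt1.
    + exact: cpos.
    + by rewrite x1 eqxx in xn1.
  have psi_ge : forall w, 0 <= e * (g (X w) + g (Y w)).
    move=> w; have [x1|xn1] := eqVneq (X w) 1; last exact/ltW/psi_pos.
    by rewrite /Y x1 invr1 /g invr1 fd1 !mulr0 mul0r addr0 mulr0.
  have iXY := integrableD measurableT Hintder iYg.
  have fX := integrable_fin_num measurableT Hintder.
  move: fX eqXYg; set I := (\int[P]_(w in setT) (g (X w))%:E)%E => fX eqXYg.
  have Ipsi : (\int[P]_(w in setT) (e * (g (X w) + g (Y w)))%:E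
       = (e * (2 * fine I))%:E)%E.
    rewrite (_ : (fun w => _) = (fun w => e%:E * ((g (X w))%:E + (g (Y w))%:E))%E); last first.
      by apply/funext => w; rewrite EFinM EFinD.
    rewrite (integralZl measurableT iXY) (integralD measurableT Hintder iYg) -eqXYg.
    rewrite -/I -(fineK fX) -EFinD -EFinM /=; congr (_%:E); ring.
  have ipsi : P.-integrable setT (fun w => (e * (g (X w) + g (Y w)))%:E).
    rewrite (_ : (fun w => _) = (fun w => e%:E * ((g (X w))%:E + (g (Y w))%:E))%E); last first.
      by apply/funext => w; rewrite EFinM EFinD.
    exact: integrableZl measurableT e _ iXY.
  have Ipos : (0 < \int[P]_(w in setT) (e * (g (X w) + g (Y w)))%:E)%E.
    rewrite lt_neqAle integral_ge0; last by move=> w _; rewrite lee_fin psi_ge.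
    rewrite andbT; apply/negP => /eqP H0.
    have mpsi := measurable_int _ ipsi.
    have : ae_eq P setT (fun w => (e * (g (X w) + g (Y w)))%:E) (cst 0%E).
      apply/(ae_eq_integral_abs P measurableT mpsi).
      rewrite [RHS]H0; apply: eq_integral => w _; rewrite gee0_abs // lee_fin; exact: psi_ge.
    move=> [N [mN PN0 sN]].
    apply: Xnc; exists 1.
    have mX1 : measurable (X @^-1` [set 1]).
      by rewrite -[X @^-1` _]setTI; apply: mX.
    apply/eqP; rewrite eq_le probability_le1 //=.
    have <- : P (~` N) = 1%E by rewrite probability_setC // PN0 sube0.
    apply: le_measure; rewrite ?inE //; first exact: measurableC.
    move=> w Nw; rewrite /preimage /=.
    apply: contra_notP Nw => /eqP xn1; apply: sN => /=.
    move=> /(_ Logic.I) [] H; move: (psi_pos w xn1); by rewrite H ltxx.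
  move: Ipos; rewrite Ipsi lte_fin mulrCA pmulr_rgt0 //.
have Cint : P.-integrable setT (fun w => (eloss l (scale G (X w)) (scale G (X w)))%:E).
  rewrite (_ : (fun w => _) = (fun w => ((eloss l (scale G 1) (scale G (X w)))%:E
       - (divg l (scale G 1) (scale G (X w)))%:E)%E)); last first.
    by apply/funext => w; rewrite -EFinB /divg opprB addrCA subrr addr0.
  apply: integrableB; [exact: measurableT|apply: Hint; exact: ltr01|apply: Hintd; exact: ltr01].
have Hsplit : forall s, 0 < s ->
    (\int[P]_(w in setT) (eloss l (scale G s) (scale G (X w)))%:E
     = (Ed s)%:E + \int[P]_(w in setT) (eloss l (scale G (X w)) (scale G (X w)))%:E)%E.
  move=> s s0.
  rewrite (_ : (fun w => _) = (fun w => ((divg l (scale G s) (scale G (X w)))%:E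
       + (eloss l (scale G (X w)) (scale G (X w)))%:E)%E)); last first.
    by apply/funext => w; rewrite -EFinD /divg subrK.
  rewrite (integralD measurableT (Hintd s s0) Cint) /Ed fineK //.
  by have := integrable_fin_num measurableT (Hintd s s0).
have cfin := integrable_fin_num measurableT Cint.
have toint : forall s, 0 < s -> Ed s < Ed 1 ->
    (\int[P]_(w in setT) (eloss l (scale G s) (scale G (X w)))%:E
     < \int[P]_(w in setT) (eloss l G (scale G (X w)))%:E)%E.
  move=> s s0 lt1.
  rewrite (_ : (fun w => (eloss l G (scale G (X w)))%:E)
     = (fun w => (eloss l (scale G 1) (scale G (X w)))%:E)); last by rewrite scale1.
  rewrite (Hsplit s s0) (Hsplit 1 ltr01) -(fineK cfin) -!EFinD lte_fin ltrD2r.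
  exact: lt1.
split.
- move=> Hq.
  have H1 : 0 < derive1 Ed 1.
    have := claim 1; rewrite mul1r; apply => x x1; rewrite mul1r; exact: Hq.
  have [y [y0 [y1 Ey]]] := descent_pos dEd H1.
  rewrite subrr in y0.
  by exists y; split => //; split => //; exact: toint.
- move=> Hq.
  have H1 : derive1 Ed 1 < 0.
    have := claim (-1); rewrite mulN1r oppr_gt0; apply => x x1.
    rewrite mulN1r oppr_gt0; exact: Hq.
  have [y [y1 Ey]] := descent_neg dEd H1.
  exists y; split => //; apply: toint => //; exact: lt_trans y1.
Unshelve. all: by end_near. Qed.
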